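(* Let $\ell$ be a prime, and let $n, d \ge 1$. Let $G \le G_n$ be a subgroup with $\dim(G_n/G) < \frac{n}{d}$. Then there exists an index $1 \le i \le n$ that is $d$-degenerate under $G$.
   Context: $G_n\cong(\mathbb{Z}/\ell)^n = \mathbb{F}_\ell^n$, with elements written $g=(g_1,\dots,g_n)$ and the group written multiplicatively. $\dim(G_n/G)$ denotes the dimension of $G_n/G$ as an $\mathbb{F}_\ell$-vector space. For a multi-index $\vec{i}=(1\le i_1<\dots<i_{d'}\le n)$, set $G_{\vec{i}}=\{g\in G_n \mid g_{i_1}\cdots g_{i_{d'}}=1\}$. An index $i$ is $d$-degenerate under $G\le G_n$ if $G$ is not contained in $G_{\vec{i}}$ for any $d'\le d$ and any multi-index $\vec{i}$ of length $d'$ containing $i$. *)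

(* Defs.v *)
From mathcomp Require Import all_boot all_algebra all_fingroup.
Set Implicit Arguments. Unset Strict Implicit. Unset Printing Implicit Defensive.
Import GRing.Theory.

(* G_n = (Z/l)^n = F_l^n, modelled as row vectors 'rV['F_l]_n; its group
   structure is the additive group (the paper writes it multiplicatively,
   so "g_{i1} ... g_{id'} = 1" becomes "g_{i1} + ... + g_{id'} = 0"). *)
Notation Gn l n := 'rV['F_l]_n.

(* G_I = { g | sum_{k in I} g_k = 0 }, where the multi-index
   i_1 < ... < i_{d'} is represented by the set I = {i_1,...,i_{d'}}. *)
Definition Gmulti (l n : nat) (I : {set 'I_n}) : {set Gn l n} :=
  [set g : Gn l n | (\sum_(k in I) g 0 k == 0)%R].

Definition dim_quot (l n : nat) (G : {group Gn l n}) : nat :=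
  logn l (#|[set: Gn l n] : G|)%g.

Definition degenerate (l n d : nat) (G : {group Gn l n}) (i : 'I_n) : Prop :=
  forall I : {set 'I_n}, i \in I -> #|I| <= d -> ~~ (G \subset Gmulti l I).

(* Main.v *)
Require Import Defs.
From mathcomp Require Import all_boot all_algebra all_fingroup.
Set Implicit Arguments. Unset Strict Implicit. Unset Printing Implicit Defensive.
Import GRing.Theory Num.Theory.
From mathcomp Require Import zify.
From Stdlib Require Import Classical.

Lemma Gmulti_group_set (l n : nat) (J : {set 'I_n}) : group_set (Gmulti l J).
Proof.
apply/group_setP; split.
  by rewrite inE FinRing.zmod1gE big1 // => k _; rewrite mxE.
move=> x y; rewrite !inE FinRing.zmodMgE => /eqP hx /eqP hy.
rewrite (eq_bigr (fun k => x 0 k + y 0 k)%R); last by move=> k _; rewrite mxE.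
by rewrite big_split /= hx hy addr0.
Qed.

Canonical Gmulti_group l n J := Group (@Gmulti_group_set l n J).

Definition evec (l n : nat) (i : 'I_n) : Gn l n := \row_k ((k == i)%:R)%R.

Lemma evec_sum (l n : nat) (i : 'I_n) (J : {set 'I_n}) :
  (\sum_(k in J) evec l i 0 k = (i \in J)%:R)%R.
Proof.
rewrite (eq_bigr (fun k => ((k == i)%:R)%R)); last by move=> k _; rewrite mxE.
case: (boolP (i \in J)) => hi.
  rewrite (bigD1 i) //= eqxx big1 ?addr0 // => k /andP[_ hk].
  by rewrite (negbTE hk).
rewrite big1 // => k hk; case: eqP hk => // -> hk; by rewrite hk in hi.
Qed.

Fixpoint valid (l n d : nat) (G : {set Gn l n}) (s : seq ('I_n * {set 'I_n})) : bool :=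
  match s with
  | [::] => true
  | p :: s' => [&& p.1 \in p.2, #|p.2| <= d, G \subset Gmulti l p.2,
                  all (fun q : 'I_n * {set 'I_n} => p.1 \notin q.2) s' & valid d G s']
  end.

Lemma valid_index (l n d : nat) (s : seq ('I_n * {set 'I_n})) :
  prime l -> forall G : {group Gn l n}, valid d G s ->
  l ^ size s %| #|[set: Gn l n] : G|%g.
Proof.
move=> pl; elim: s => [|[i J] s IH] G /=; first by rewrite expn0 dvd1n.
case/and5P=> iJ _ GJ alls vs.
set G2 := (G <*> <[evec l i]>)%G.
have sG2 : G \subset G2 by apply: joing_subl.
have vs2 : valid d G2 s.
  elim: s alls vs {IH} => [|[i' J'] s' IH'] //= /andP[hi all'] /and5P[a b c e f].
  rewrite a b e /= (IH' all' f) andbT join_subG c cycle_subG /= inE evec_sum.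
  by rewrite (negbTE hi).
rewrite -(Lagrange_index (subsetT G2) sG2) expnS [l * _]mulnC; apply: dvdn_mul; first exact: IH.
have gt1 : 1 < #|G2 : G|%g.
  rewrite indexg_gt1; apply/negP => h.
  have : evec l i \in G2 by rewrite mem_gen // inE cycle_id orbT.
  move/(subsetP h)/(subsetP GJ); rewrite inE evec_sum iJ.
  by rewrite oner_eq0.
have dv : #|G2 : G|%g %| l ^ n.
  apply: dvdn_trans (dvdn_indexg _ _) _.
  have -> : l ^ n = #|[set: Gn l n]| by rewrite cardsT card_mx card_Fp // mul1n.
  exact: cardSg (subsetT _).
have pd := pdiv_prime gt1.
have : pdiv #|G2 : G|%g %| l.
  have := dvdn_trans (pdiv_dvd _) dv.
  by rewrite Euclid_dvdX // => /andP[].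
rewrite dvdn_prime2 // => /eqP e; rewrite -[X in X %| _]e; exact: pdiv_dvd.
Qed.

Definition cover (n : nat) (s : seq ('I_n * {set 'I_n})) : {set 'I_n} :=
  \bigcup_(p <- s) p.2.

Lemma cover_card (n d : nat) l (G : {set Gn l n}) s : valid d G s -> #|cover s| <= size s * d.
Proof.
elim: s => [|p s IH] /=; first by rewrite /cover big_nil cards0.
case/and5P=> _ h _ _ v; rewrite /cover big_cons mulSn.
apply: leq_trans (leq_card_setU _ _) _.
apply: leq_add => //; exact: IH.
Qed.

Lemma greedy (l n d : nat) (G : {group Gn l n}) :
  (forall i : 'I_n, exists I : {set 'I_n}, [/\ i \in I, #|I| <= d & G \subset Gmulti l I]) ->
  forall k s, n - #|cover s| <= k -> valid d G s ->
  exists s', valid d G s' /\ cover s' = setT.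
Proof.
move=> H; elim=> [|k IH] s hk vs.
  exists s; split => //; apply/eqP; rewrite eqEcard subsetT cardsT card_ord.
  by rewrite -subn_eq0 -leqn0.
case: (altP (cover s =P setT)) => [e|ne]; first by exists s.
have [i hi] : exists i, i \notin cover s.
  apply/existsP; move: ne; apply: contraR; rewrite negb_exists => /forallP h.
  by apply/eqP/setP => x; rewrite inE; move: (h x); rewrite negbK.
have [I [iI cI GI]] := H i.
apply: (IH ((i, I) :: s)).
  have hlt : #|cover s| < #|cover ((i, I) :: s)|.
    apply: proper_card; rewrite properEneq; apply/andP; split.
      apply/eqP => e; move: hi; rewrite e /cover big_cons inE iI //.
    by rewrite /cover big_cons subsetUr.
  have : #|cover ((i, I) :: s)| <= n by rewrite -[X in _ <= X]card_ord max_card.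
  move: hk hlt; rewrite -!subn_eq0; lia.
rewrite /= iI cI GI vs !andbT /=.
apply/allP => [[j J]] hj /=; apply: contra hi => hiJ.
elim: s {IH hk vs ne} hj => [|q s IHs] //; rewrite inE /cover big_cons inE.
case/orP => [/eqP <-|/IHs ->]; last by rewrite orbT.
by rewrite hiJ.
Qed.

Theorem lemma2p11 (l n d : nat) (G : {group Gn l n}) :
  prime l -> 1 <= n -> 1 <= d ->
  ((dim_quot G)%:R < n%:R / d%:R :> rat)%R ->
  exists i : 'I_n, degenerate d G i.
Proof.
move=> pl n1 d1 hq.
have hlt : dim_quot G * d < n.
  move: hq; rewrite ltr_pdivlMr ?ltr0n // -natrM ltr_nat //.
apply/not_all_not_ex => hn.
have H : forall i : 'I_n, exists I : {set 'I_n},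
    [/\ i \in I, #|I| <= d & G \subset Gmulti l I].
  move=> i; have := hn i; rewrite /degenerate => h.
  apply/not_all_not_ex => h2; apply: h => I iI cI; apply/negP => GI.
  by apply: (h2 I); split.
have [s [vs cs]] := greedy H (leqnn (n - #|cover [::]|)) (isT : valid d G [::]).
have h1 := cover_card vs; rewrite cs cardsT card_ord in h1.
have h2 := valid_index pl vs.
rewrite pfactor_dvdn // in h2.
Show.
have : size s * d <= dim_quot G * d by rewrite leq_mul2r h2 orbT.
rewrite /dim_quot in hlt *; lia.
Qed.
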